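(* Let $U\in\mathbb{R}^{n\times d}$, let $\mathbf{x}_*\in\mathbb{R}^d$ be $s$-sparse and $\mathbf{y}=U\mathbf{x}_*$ (noiseless, $\mathbf{e}=0$). Let $\mathbf{x}_t$ be an iterate of Algorithm 1 and $\mathbf{x}_{t+1}$ the next iterate; let $\mathcal{S}_t,\mathcal{S}_{t+1},\mathcal{S}_*$ be the supports of $\mathbf{x}_t,\mathbf{x}_{t+1},\mathbf{x}_*$. If $|\mathcal{S}_t\setminus\mathcal{S}_*|\le s$ and $\lambda_t\ge\frac{\delta_s+\sqrt2\theta_{s,s}}{\sqrt s}\|\mathbf{x}_t-\mathbf{x}_*\|_2$, then $|\mathcal{S}_{t+1}\setminus\mathcal{S}_*|\le s$ and $|\mathcal{S}_*\cup\mathcal{S}_t\cup\mathcal{S}_{t+1}|\le3s$.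
   Context: $U_{\mathcal T}$ is the column submatrix of $U$ indexed by $\mathcal T$. $\delta_s$ is the smallest constant $\ge0$ with $(1-\delta_s)\|\mathbf{v}\|_2^2\le\|U_{\mathcal T}\mathbf{v}\|_2^2\le(1+\delta_s)\|\mathbf{v}\|_2^2$ for all $|\mathcal T|\le s$, $\mathbf{v}\in\mathbb{R}^{|\mathcal T|}$; $\theta_{s,s}$ (with $2s\le d$) is the smallest constant with $|\langle U_{\mathcal T}\mathbf{v},U_{\mathcal T'}\mathbf{v}'\rangle|\le\theta_{s,s}\|\mathbf{v}\|_2\|\mathbf{v}'\|_2$ for all disjoint $\mathcal T,\mathcal T'$ of size at most $s$. Algorithm 1: $\mathbf{x}_1=0$ and $\mathbf{x}_{t+1}=\mathrm{sign}(\widehat{\mathbf{x}}_t)[|\widehat{\mathbf{x}}_t|-\lambda_t]_+$ with $\widehat{\mathbf{x}}_t=\mathbf{x}_t-U^\top(U\mathbf{x}_t-\mathbf{y})$ (componentwise), for parameters $\lambda_t>0$. *)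

(* Defs.v *)
From mathcomp Require Import all_boot all_order all_algebra.
From mathcomp Require Import boolp classical_sets reals.
Set Implicit Arguments. Unset Strict Implicit. Unset Printing Implicit Defensive.
Import Order.TTheory GRing.Theory Num.Theory.
Local Open Scope ring_scope.
Local Open Scope classical_set_scope.

Section Defs.
Variable R : realType.

Definition sqnorm {m : nat} (v : 'cV[R]_m) : R := \sum_(i < m) (v i 0) ^+ 2.
Definition norm2 {m : nat} (v : 'cV[R]_m) : R := Num.sqrt (sqnorm v).
Definition inner {m : nat} (a b : 'cV[R]_m) : R := \sum_(i < m) a i 0 * b i 0.

Definition supp {d : nat} (x : 'cV[R]_d) : {set 'I_d} := [set i | x i 0 != 0].

(* U_T : column submatrix of U indexed by T (columns in increasing order) *)
Definition colsubT {n d : nat} (U : 'M[R]_(n, d)) (T : {set 'I_d}) : 'M[R]_(n, #|T|) :=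
  colsub (fun k : 'I_#|T| => enum_val k) U.

Definition rip_set {n d : nat} (U : 'M[R]_(n, d)) (s : nat) : set R :=
  [set c | 0 <= c /\
    forall (T : {set 'I_d}) (v : 'cV[R]_#|T|), (#|T| <= s)%N ->
      (1 - c) * sqnorm v <= sqnorm (colsubT U T *m v) /\
      sqnorm (colsubT U T *m v) <= (1 + c) * sqnorm v].

Definition delta {n d : nat} (U : 'M[R]_(n, d)) (s : nat) : R := inf (rip_set U s).

Definition roc_set {n d : nat} (U : 'M[R]_(n, d)) (s : nat) : set R :=
  [set c | 0 <= c /\
    forall (T T' : {set 'I_d}) (v : 'cV[R]_#|T|) (v' : 'cV[R]_#|T'|),
      (#|T| <= s)%N -> (#|T'| <= s)%N -> (T :&: T' == finset.set0)%SET ->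
      `|inner (colsubT U T *m v) (colsubT U T' *m v')| <= c * norm2 v * norm2 v'].

Definition theta {n d : nat} (U : 'M[R]_(n, d)) (s : nat) : R := inf (roc_set U s).

Definition soft (l a : R) : R := Num.sg a * Num.max (`|a| - l) 0.

(* Algorithm 1: x_1 = 0, x_{t+1} = soft_{lam_t}(x_t - U^T (U x_t - y)).
   Indices: iterate t (t >= 1) is ista U y lam t; ista ... 0 is unused (= 0). *)
Fixpoint ista {n d : nat} (U : 'M[R]_(n, d)) (y : 'cV[R]_n) (lam : nat -> R) (t : nat)
  : 'cV[R]_d :=
  match t with
  | 0 | 1 => 0
  | t'.+1 =>
      let xt := ista U y lam t' in
      let xh := xt - U^T *m (U *m xt - y) in
      \col_i soft (lam t') (xh i 0)
  end.

End Defs.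

(* Main.v *)
Require Import Defs.
From mathcomp Require Import all_boot all_order all_algebra.
From mathcomp Require Import boolp classical_sets reals.
From mathcomp Require Import ring lra.
Import Order.TTheory GRing.Theory Num.Theory.
Set Implicit Arguments. Unset Strict Implicit. Unset Printing Implicit Defensive.
Local Open Scope ring_scope.

Section Aux.
Variable R : realType.

Lemma sqnormE m (a : 'cV[R]_m) : sqnorm a = inner a a.
Proof. by rewrite /sqnorm /inner; apply: eq_bigr => i _; rewrite expr2. Qed.

Lemma innerC m (a b : 'cV[R]_m) : inner a b = inner b a.
Proof. by rewrite /inner; apply: eq_bigr => i _; rewrite mulrC. Qed.

Lemma innerDl m (a b c : 'cV[R]_m) : inner (a + b) c = inner a c + inner b c.
Proof. by rewrite /inner -big_split; apply: eq_bigr => i _; rewrite mxE mulrDl. Qed.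

Lemma innerDr m (a b c : 'cV[R]_m) : inner c (a + b) = inner c a + inner c b.
Proof. by rewrite innerC innerDl !(innerC c). Qed.

Lemma innerZl m k (a c : 'cV[R]_m) : inner (k *: a) c = k * inner a c.
Proof. by rewrite /inner mulr_sumr; apply: eq_bigr => i _; rewrite mxE mulrA. Qed.

Lemma innerZr m k (a c : 'cV[R]_m) : inner c (k *: a) = k * inner c a.
Proof. by rewrite innerC innerZl innerC. Qed.

Lemma innerNl m (a c : 'cV[R]_m) : inner (- a) c = - inner a c.
Proof. by rewrite -scaleN1r innerZl mulN1r. Qed.

Lemma innerBr m (a b c : 'cV[R]_m) : inner c (a - b) = inner c a - inner c b.
Proof. by rewrite innerDr (innerC c (-b)) innerNl (innerC b). Qed.

Lemma sqnorm_ge0 m (a : 'cV[R]_m) : 0 <= sqnorm a.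
Proof. by apply: sumr_ge0 => i _; apply: sqr_ge0. Qed.

Lemma norm2_ge0 m (a : 'cV[R]_m) : 0 <= norm2 a.
Proof. exact: sqrtr_ge0. Qed.

Lemma norm2_sq m (a : 'cV[R]_m) : norm2 a ^+ 2 = sqnorm a.
Proof. by rewrite /norm2 sqr_sqrtr // sqnorm_ge0. Qed.

Lemma inner_mulT n m (U : 'M[R]_(n, m)) (z : 'cV[R]_m) (v : 'cV[R]_n) :
  inner z (U^T *m v) = inner (U *m z) v.
Proof.
rewrite /inner.
under eq_bigr => i _ do rewrite mxE mulr_sumr.
rewrite exchange_big /=; apply: eq_bigr => k _.
rewrite mxE mulr_suml; apply: eq_bigr => i _; rewrite mxE; ring.
Qed.

Lemma entry_le m (a : 'cV[R]_m) i : `|a i 0| <= norm2 a.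
Proof.
rewrite -sqrtr_sqr ler_sqrt ?sqnorm_ge0 //.
rewrite /sqnorm (bigD1 i) //= lerDl; apply: sumr_ge0 => j _; apply: sqr_ge0.
Qed.

Definition restr d (T : {set 'I_d}) (x : 'cV[R]_d) : 'cV[R]_#|T| :=
  \col_k x (enum_val k) 0.

Lemma restr_mul n d (U : 'M[R]_(n, d)) (T : {set 'I_d}) (x : 'cV[R]_d) :
  (forall i, i \notin T -> x i 0 = 0) ->
  colsubT U T *m restr T x = U *m x.
Proof.
move=> hx; apply/matrixP => i j; rewrite (ord1 j) !mxE.
rewrite [RHS](bigID (fun k => k \in T)) /=.
rewrite [X in _ = _ + X]big1 ?addr0; last by move=> k /hx ->; rewrite mulr0.
rewrite (big_enum_val (A := mem T)) /=; apply: eq_bigr => k _.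
by rewrite !mxE.
Qed.

Lemma restr_sqnorm d (T : {set 'I_d}) (x : 'cV[R]_d) :
  (forall i, i \notin T -> x i 0 = 0) ->
  sqnorm (restr T x) = sqnorm x.
Proof.
move=> hx; rewrite /sqnorm [RHS](bigID (fun k => k \in T)) /=.
rewrite [X in _ = _ + X]big1 ?addr0; last by move=> k /hx ->; rewrite expr0n.
rewrite (big_enum_val (A := mem T)) /=; apply: eq_bigr => k _.
by rewrite !mxE.
Qed.

Lemma restr_norm2 d (T : {set 'I_d}) (x : 'cV[R]_d) :
  (forall i, i \notin T -> x i 0 = 0) ->
  norm2 (restr T x) = norm2 x.
Proof. by move=> hx; rewrite /norm2 restr_sqnorm. Qed.

End Aux.
Section Main.
Variables (R : realType) (n d : nat) (U : 'M[R]_(n, d)) (s : nat).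

Definition supT (T : {set 'I_d}) (x : 'cV[R]_d) := forall i, i \notin T -> x i 0 = 0.

Lemma rip_le c : rip_set U s c -> forall (T : {set 'I_d}) (x : 'cV[R]_d), (#|T| <= s)%N -> supT T x ->
  (1 - c) * sqnorm x <= sqnorm (U *m x) /\ sqnorm (U *m x) <= (1 + c) * sqnorm x.
Proof.
case=> _ H T x hT hx; have := H T (restr T x) hT.
by rewrite restr_mul // restr_sqnorm.
Qed.

Lemma roc_le c : roc_set U s c -> forall (T T' : {set 'I_d}) (x x' : 'cV[R]_d), (#|T| <= s)%N -> (#|T'| <= s)%N ->
  (T :&: T' == finset.set0)%SET -> supT T x -> supT T' x' ->
  `|inner (U *m x) (U *m x')| <= c * norm2 x * norm2 x'.
Proof.
case=> _ H T T' x x' hT hT' hI hx hx'; have := H T T' (restr T x) (restr T' x') hT hT' hI.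
by rewrite !restr_mul // !restr_norm2.
Qed.

Lemma sqnormDZ (k : R) (a b : 'cV[R]_d) :
  sqnorm (k *: a + b) = k ^+ 2 * sqnorm a + 2 * k * inner a b + sqnorm b.
Proof.
rewrite !sqnormE !innerDl !innerDr !innerZl !innerZr (innerC b a); ring.
Qed.

Lemma sqnormBZ (k : R) (a b : 'cV[R]_d) :
  sqnorm (k *: a - b) = k ^+ 2 * sqnorm a - 2 * k * inner a b + sqnorm b.
Proof.
rewrite -scaleN1r.
rewrite !sqnormE !innerDl !innerDr !innerZl !innerZr (innerC b a); ring.
Qed.

Lemma sqnormDZn (k : R) (a b : 'cV[R]_n) :
  sqnorm (k *: a + b) = k ^+ 2 * sqnorm a + 2 * k * inner a b + sqnorm b.
Proof.
rewrite !sqnormE !innerDl !innerDr !innerZl !innerZr (innerC b a); ring.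
Qed.

Lemma sqnormBZn (k : R) (a b : 'cV[R]_n) :
  sqnorm (k *: a - b) = k ^+ 2 * sqnorm a - 2 * k * inner a b + sqnorm b.
Proof.
rewrite -scaleN1r.
rewrite !sqnormE !innerDl !innerDr !innerZl !innerZr (innerC b a); ring.
Qed.

Lemma sqnorm0_eq m (x : 'cV[R]_m) : sqnorm x = 0 -> x = 0.
Proof.
move=> h; apply/matrixP => i j; rewrite (ord1 j) mxE.
rewrite /sqnorm in h.
have := psumr_eq0P (F := fun k => x k 0 ^+ 2) (fun k _ => sqr_ge0 (x k 0)) h (i:=i) isT.
by move/eqP; rewrite sqrf_eq0 => /eqP.
Qed.

Lemma inner0l m (y : 'cV[R]_m) : inner 0 y = 0.
Proof. by rewrite /inner big1 // => i _; rewrite mxE mul0r. Qed.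

Lemma polar c : rip_set U s c -> forall (T : {set 'I_d}) (x y : 'cV[R]_d), (#|T| <= s)%N -> supT T x -> supT T y ->
  `|inner x y - inner (U *m x) (U *m y)| <= c * norm2 x * norm2 y.
Proof.
move=> hc T x y hT hx hy.
have c0 : 0 <= c by case: hc.
have [a0|a0] := eqVneq (norm2 x) 0.
  have : sqnorm x = 0 by rewrite -norm2_sq a0 expr0n.
  move/sqnorm0_eq => ->; rewrite mulmx0 !inner0l subrr normr0.
  by rewrite !mulr_ge0 ?norm2_ge0.
have [b0|b0] := eqVneq (norm2 y) 0.
  have : sqnorm y = 0 by rewrite -norm2_sq b0 expr0n.
  move/sqnorm0_eq => ->; rewrite mulmx0 !(innerC x) !(innerC (U *m x)) !inner0l.
  by rewrite subrr normr0 !mulr_ge0 ?norm2_ge0.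
set a := norm2 x in a0 *; set b := norm2 y in b0 *.
have apos : 0 < a by rewrite lt0r a0 norm2_ge0.
have bpos : 0 < b by rewrite lt0r b0 norm2_ge0.
set al := b / a.
have alpos : 0 < al by rewrite divr_gt0.
have ala : al * a = b by rewrite /al divfK // gt_eqF.
have sp : supT T (al *: x + y) by move=> i hi; rewrite !mxE hx // hy // mulr0 addr0.
have sm : supT T (al *: x - y) by move=> i hi; rewrite !mxE hx // hy // mulr0 subrr.
have [p1 p2] := rip_le hc hT sp.
have [m1 m2] := rip_le hc hT sm.
move: p1 p2 m1 m2.
rewrite mulmxDr mulmxBr -!scalemxAr sqnormDZ sqnormBZ sqnormDZn sqnormBZn.
rewrite -!norm2_sq -/a -/b.
set I := inner x y; set I' := inner (U *m x) (U *m y).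
set P' := sqnorm (U *m x); set Q' := sqnorm (U *m y).
move=> p1 p2 m1 m2.
have e1 : al ^+ 2 * a ^+ 2 = al * a * b by rewrite -ala; ring.
have h1 : al * (I - I' - c * a * b) <= 0.
  have : 4 * al * (I - I') <= 2 * c * (al ^+ 2 * a ^+ 2 + b ^+ 2) by nra.
  rewrite e1 ala => h; nra.
have h2 : al * (I' - I - c * a * b) <= 0.
  have : 4 * al * (I' - I) <= 2 * c * (al ^+ 2 * a ^+ 2 + b ^+ 2) by nra.
  rewrite e1 ala => h; nra.
rewrite ler_norml; apply/andP; split; nra.
Qed.

End Main.
Section Nonempty.
Variables (R : realType) (n d : nat) (U : 'M[R]_(n, d)) (s : nat).

Lemma mul_bound m (M : 'M[R]_(n, m)) (B : R) : (forall i k, `|M i k| <= B) ->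
  forall (v : 'cV[R]_m) i, `|(M *m v) i 0| <= m%:R * B * norm2 v.
Proof.
move=> hB v i; rewrite mxE; apply: le_trans (ler_norm_sum _ _ _) _.
apply: le_trans (_ : \sum_(k < m) B * norm2 v <= _).
  apply: ler_sum => k _; rewrite normrM; apply: ler_pM => //; exact: entry_le.
by rewrite sumr_const card_ord -mulr_natl mulr1 -mulrA mulr_natl.
Qed.

Definition B0 := \sum_i \sum_j `|U i j|.
Definition C0 := d%:R * B0.
Definition K0 := n%:R * C0 ^+ 2.

Lemma B0_ge i j : `|U i j| <= B0.
Proof.
rewrite /B0 (bigD1 i) //= (bigD1 j) //= -addrA lerDl addr_ge0 //.
  by apply: sumr_ge0 => ? _.
by apply: sumr_ge0 => ? _; apply: sumr_ge0.
Qed.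

Lemma B0_ge0 : 0 <= B0.
Proof. by apply: sumr_ge0 => ? _; apply: sumr_ge0. Qed.

Lemma C0_ge0 : 0 <= C0.
Proof. by rewrite /C0 mulr_ge0 // B0_ge0. Qed.

Lemma K0_ge0 : 0 <= K0.
Proof. by rewrite /K0 mulr_ge0 // sqr_ge0. Qed.

Lemma colsub_bound (T : {set 'I_d}) (v : 'cV[R]_#|T|) i :
  `|(colsubT U T *m v) i 0| <= C0 * norm2 v.
Proof.
apply: le_trans (mul_bound _ _ _) _.
  by move=> i' k; rewrite mxE; apply: B0_ge.
rewrite -mulrA /C0 -mulrA ler_wpM2r ?mulr_ge0 ?B0_ge0 ?norm2_ge0 // ler_nat.
by have := max_card (mem T); rewrite card_ord.
Qed.

Lemma sq_le (x y : R) : `|x| <= y -> x ^+ 2 <= y ^+ 2.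
Proof.
move=> h; rewrite -(real_normK (num_real x)).
by rewrite lerXn2r // ?nnegrE ?normr_ge0 // (le_trans (normr_ge0 _) h).
Qed.

Lemma colsub_sq (T : {set 'I_d}) (v : 'cV[R]_#|T|) :
  sqnorm (colsubT U T *m v) <= K0 * sqnorm v.
Proof.
rewrite /sqnorm; apply: le_trans (_ : \sum_(i < n) (C0 * norm2 v) ^+ 2 <= _).
  by apply: ler_sum => i _; apply: sq_le; apply: colsub_bound.
by rewrite sumr_const card_ord -mulr_natl exprMn norm2_sq /K0 mulrA.
Qed.

Lemma rip_ne : rip_set U s (1 + K0).
Proof.
split; first by rewrite addr_ge0 // K0_ge0.
move=> T v _; have := colsub_sq v; have := sqnorm_ge0 v.
have := sqnorm_ge0 (colsubT U T *m v); have := K0_ge0.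
move=> *; split; nra.
Qed.

Lemma roc_ne : roc_set U s K0.
Proof.
split; first exact: K0_ge0.
move=> T T' v v' _ _ _; rewrite /inner.
apply: le_trans (ler_norm_sum _ _ _) _.
apply: le_trans (_ : \sum_(i < n) (C0 * norm2 v) * (C0 * norm2 v') <= _).
  apply: ler_sum => i _; rewrite normrM; apply: ler_pM => //; exact: colsub_bound.
rewrite sumr_const card_ord -mulr_natl /K0.
rewrite le_eqVlt; apply/orP; left; apply/eqP; ring.
Qed.

Lemma rip_inf : has_inf (rip_set U s).
Proof. split; first by exists (1 + K0); apply: rip_ne. by exists 0 => c [] . Qed.

Lemma roc_inf : has_inf (roc_set U s).
Proof. split; first by exists K0; apply: roc_ne. by exists 0 => c [] . Qed.

End Nonempty.
Section Key.
Variables (R : realType) (n d : nat) (U : 'M[R]_(n, d)) (s : nat).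

Definition res (P : {set 'I_d}) (x : 'cV[R]_d) : 'cV[R]_d :=
  \col_i (if i \in P then x i 0 else 0).

Lemma res_sup P x : supT P (res P x).
Proof. by move=> i hi; rewrite mxE (negbTE hi). Qed.

Lemma key c1 c2 : rip_set U s c1 -> roc_set U s c2 ->
  forall (S A T : {set 'I_d}) (h : 'cV[R]_d),
  (#|S| <= s)%N -> (#|A| <= s)%N -> (#|T| <= s)%N ->
  A \subset ~: S -> T \subset ~: S -> supT (S :|: A) h ->
  norm2 (res T (h - U^T *m (U *m h))) <= (c1 + Num.sqrt 2 * c2) * norm2 h.
Proof.
move=> hc1 hc2 S A T h hS hA hT AS TS hsup.
have c10 : 0 <= c1 by case: hc1.
have c20 : 0 <= c2 by case: hc2.
set w := h - _.
set z := res T w.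
set h1 := res T h; set h2 := res S h; set h3 := res (A :\: T) h.
have tS i : i \in T -> i \notin S by move=> hi; have := fintype.subsetP TS i hi; rewrite inE.
have aS i : i \in A -> i \notin S by move=> hi; have := fintype.subsetP AS i hi; rewrite inE.
have hs i : i \notin S -> i \notin A -> h i 0 = 0.
  by move=> h1' h2'; apply: hsup; rewrite inE negb_or h1' h2'.
have hdec : h = h1 + h2 + h3.
  { apply/matrixP => i j; rewrite (ord1 j) !mxE !inE.
  move: (tS i) (aS i) (hs i).
  case: (i \in S); case: (i \in T); case: (i \in A) => //=.
  all: move=> t1 t2 t3; rewrite ?addr0 ?add0r //;
    first [by have := t1 isT | by have := t2 isT | by apply: t3]. }
have hsq : sqnorm h = sqnorm h1 + sqnorm h2 + sqnorm h3.
  { rewrite /sqnorm -!big_split /=; apply: eq_bigr => i _; rewrite !mxE !inE.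
  move: (tS i) (aS i) (hs i).
  case: (i \in S); case: (i \in T); case: (i \in A) => //=.
  all: move=> t1 t2 t3; rewrite ?expr0n /= ?addr0 ?add0r //.
  all: try by have := t1 isT.
  all: try by have := t2 isT.
  by rewrite t3 // expr0n. }
have hzw : inner z w = sqnorm z.
  rewrite sqnormE /inner; apply: eq_bigr => i _; rewrite !mxE.
  by case: (i \in T); rewrite ?mul0r.
have hzh : inner z h = inner z h1.
  rewrite /inner; apply: eq_bigr => i _; rewrite !mxE.
  by case: (i \in T); rewrite ?mul0r.
have eq1 : sqnorm z = (inner z h1 - inner (U *m z) (U *m h1))
     - inner (U *m z) (U *m h2) - inner (U *m z) (U *m h3).
  rewrite -hzw /w innerBr inner_mulT hzh {1}hdec !mulmxDr !innerDr; ring.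
have zT : supT T z by apply: res_sup.
have b1 := polar hc1 hT zT (res_sup (P:=T) h).
have S0 : (T :&: S == finset.set0)%SET.
  apply/eqP/setP => i; rewrite !inE; apply/negbTE; rewrite negb_and.
  by case hi: (i \in T) => //=; apply: tS.
have A0 : (T :&: (A :\: T) == finset.set0)%SET.
  apply/eqP/setP => i; rewrite !inE; by case: (i \in T).
have hAT : (#|A :\: T| <= s)%N.
  by apply: leq_trans hA; apply: subset_leq_card; apply: subsetDl.
have b2 := roc_le hc2 hT hS S0 zT (res_sup (P:=S) h).
have b3 := roc_le hc2 hT hAT A0 zT (res_sup (P:=A :\: T) h).
rewrite -/h1 -/h2 -/h3 in b1 b2 b3.
move: eq1 b1 b2 b3 hsq.
rewrite -!norm2_sq.
have := norm2_ge0 z; have := norm2_ge0 h1; have := norm2_ge0 h2;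
  have := norm2_ge0 h3; have := norm2_ge0 h.
set a := norm2 z; set b := norm2 h1; set e := norm2 h2; set f := norm2 h3;
  set H := norm2 h.
set I1 := inner z h1 - _; set I2 := inner _ _; set I3 := inner _ _.
move=> H0 f0 e0 b0 a0 eq1 b1 b2 b3 hsq.
have r2 : Num.sqrt 2 ^+ 2 = 2 :> R by rewrite sqr_sqrtr.
have r20 : 0 <= Num.sqrt 2 :> R by apply: sqrtr_ge0.
have ha : a <= c1 * b + c2 * (e + f).
  have : a ^+ 2 <= a * (c1 * b + c2 * (e + f)).
    rewrite eq1.
    move: b1 b2 b3; rewrite !ler_norml => /andP[? ?] /andP[? ?] /andP[? ?].
    nra.
  have : 0 <= c1 * b + c2 * (e + f) by rewrite addr_ge0 ?mulr_ge0 ?addr_ge0.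
  nra.
have hb : b <= H by nra.
have hef : e + f <= Num.sqrt 2 * H.
  have hq : (e + f) ^+ 2 <= (Num.sqrt 2 * H) ^+ 2 by rewrite exprMn r2 hsq; have := sqr_ge0 (e - f); have := sqr_ge0 b; nra.
  have : 0 <= Num.sqrt 2 * H by apply: mulr_ge0.
  nra.
nra.
Qed.

End Key.
Lemma ex_subset_card (T : finType) (B : {set T}) k :
  (k <= #|B|)%N -> exists C : {set T}, C \subset B /\ #|C| = k.
Proof.
elim: k => [|k IH] hk.
  by exists finset.set0; rewrite finset.sub0set cards0.
have [C [CB Ck]] := IH (ltnW hk).
have : (0 < #|B :\: C|)%N.
  by rewrite cardsD (finset.setIidPr CB) Ck subn_gt0.
rewrite card_gt0 => /finset.set0Pn [x]; rewrite inE => /andP [xC xB].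
exists (x |: C); split.
  by rewrite finset.subUset finset.sub1set xB CB.
by rewrite cardsU1 xC Ck.
Qed.

Lemma soft_nz (R : realType) (l a : R) : soft l a != 0 -> l < `|a|.
Proof.
rewrite /soft maxEle; case: (lerP (`|a| - l) 0) => h.
  by rewrite mulr0 eqxx.
by move=> _; rewrite -subr_gt0.
Qed.

Theorem corollary1 (R : realType) (n d s : nat) (U : 'M[R]_(n, d))
  (xs : 'cV[R]_d) (lam : nat -> R) (t : nat) :
  (0 < s)%N -> (2 * s <= d)%N ->
  (forall k, 0 < lam k) ->
  (#|supp xs| <= s)%N ->
  (1 <= t)%N ->
  let y := U *m xs in
  let xt := ista U y lam t in
  let xt1 := ista U y lam t.+1 in
  (#|supp xt :\: supp xs| <= s)%N ->
  lam t >= (delta U s + Num.sqrt 2 * theta U s) / Num.sqrt s%:R * norm2 (xt - xs) ->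
  (#|supp xt1 :\: supp xs| <= s)%N /\
  (#|supp xs :|: supp xt :|: supp xt1| <= 3 * s)%N.
Proof.
move=> s0 _ hlam hS ht y xt xt1 hA hl.
set S := supp xs; set St := supp xt; set St1 := supp xt1.
set h := xt - xs.
set w := h - U^T *m (U *m h).
have ex1 : xt1 = \col_i soft (lam t) ((xt - U^T *m (U *m xt - y)) i 0).
  by rewrite /xt1 /xt; case: t ht {hl hA xt St h w S St1 xt1} => // t' _.
have exh : xt - U^T *m (U *m xt - y) = xs + w.
  rewrite /w /h /y -mulmxBr; set q := U^T *m _.
  by apply/matrixP => i j; rewrite !mxE; ring.
set B := [set i | (i \notin S) && (lam t < `|w i 0|)].
have sub1 : St1 :\: S \subset B.
  apply/fintype.subsetP => i; rewrite !inE => /andP [iS].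
  rewrite ex1 exh mxE [(xs + w) i 0]mxE => /soft_nz.
  move: (iS) => /negPn/eqP ->; rewrite add0r => hw.
  by rewrite eqxx hw.
have hB : (#|B| <= s)%N.
  rewrite leqNgt; apply/negP => hBs.
  have [T [TB Ts]] := ex_subset_card (ltnW hBs).
  have TS : T \subset ~: S.
    apply/fintype.subsetP => i /(fintype.subsetP TB); rewrite !inE.
    by case/andP.
  have AS : St :\: S \subset ~: S.
    by apply/fintype.subsetP => i; rewrite !inE; case/andP.
  have hsup : supT (S :|: (St :\: S)) h.
    move=> i; rewrite !inE negb_or negb_and negbK => /andP [/eqP x0 iSt].
    move: iSt; rewrite x0 eqxx orFb negbK => /eqP xt0.
    by rewrite /h !mxE x0 xt0 subrr.
  have K c1 c2 : rip_set U s c1 -> roc_set U s c2 ->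
      norm2 (res T w) <= (c1 + Num.sqrt 2 * c2) * norm2 h.
    move=> h1 h2; exact: (key h1 h2 hS hA (eq_leq Ts) AS TS hsup).
  set a := norm2 (res T w).
  set H := norm2 h.
  have H0 : 0 <= H by apply: norm2_ge0.
  have r20 : 0 <= Num.sqrt 2 :> R by apply: sqrtr_ge0.
  have hD : a <= (delta U s + Num.sqrt 2 * theta U s) * H.
    apply/ler_addgt0Pr => e e0.
    set k := (1 + Num.sqrt 2) * (H + 1).
    have k0 : 0 < k by rewrite /k; apply: mulr_gt0; lra.
    set eps := e / k.
    have eps0 : 0 < eps by rewrite divr_gt0.
    have epsk : eps * k = e by rewrite /eps divfK // gt_eqF.
    have [c1 hc1 lt1] := inf_adherent eps0 (rip_inf U s).
    have [c2 hc2 lt2] := inf_adherent eps0 (roc_inf U s).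
    have := K c1 c2 hc1 hc2.
    rewrite /delta /theta -/a.
    move: epsk; rewrite /k => epsk.
    set dl := inf (rip_set U s) in lt1 *; set th := inf (roc_set U s) in lt2 *.
    have m1 : c1 * H <= (dl + eps) * H by apply: ler_wpM2r => //; apply: ltW.
    have m2 : Num.sqrt 2 * c2 * H <= Num.sqrt 2 * (th + eps) * H.
      by apply: ler_wpM2r => //; apply: ler_wpM2l => //; apply: ltW.
    have m3 : eps * (1 + Num.sqrt 2) * H <= e.
      rewrite -epsk mulrA ler_wpM2l ?lerDl //.
      by apply: mulr_ge0; [apply: ltW | lra].
    move=> hK; apply: le_trans hK _.
    rewrite -/H; lra.
  have sq0 : 0 < Num.sqrt s%:R :> R by rewrite sqrtr_gt0 ltr0n.
  have ha : a <= Num.sqrt s%:R * lam t.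
    apply: le_trans hD _.
    move: hl; set D := delta U s + _ => hl.
    have e : D * H = Num.sqrt s%:R * (D / Num.sqrt s%:R * H).
      by field; rewrite gt_eqF.
    rewrite e ler_pM2l //.
  have ha2 : a ^+ 2 <= s%:R * lam t ^+ 2.
    have -> : s%:R * lam t ^+ 2 = (Num.sqrt s%:R * lam t) ^+ 2 :> R.
      by rewrite exprMn sqr_sqrtr // ler0n.
    by apply: lerXn2r; rewrite // nnegrE ?norm2_ge0 // mulr_ge0 // ltW.
  have hz : a ^+ 2 = \sum_(i in T) w i 0 ^+ 2.
    rewrite /a norm2_sq /sqnorm [RHS]big_mkcond /=; apply: eq_bigr => i _.
    by rewrite mxE; case: (i \in T); rewrite ?expr0n.
  have : s%:R * lam t ^+ 2 < a ^+ 2.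
    rewrite hz.
    have : (0 < #|T|)%N by rewrite Ts.
    rewrite card_gt0 => /finset.set0Pn [i0 i0T].
    apply: le_lt_trans (_ : \sum_(i in T) lam t ^+ 2 < _).
      by rewrite sumr_const Ts mulr_natl.
    apply: ltr_sum.
      by apply/hasP; exists i0; rewrite ?mem_index_enum.
    move=> i iT; have := fintype.subsetP TB i iT; rewrite inE => /andP [_ hi].
    rewrite -(real_normK (num_real (w i 0))).
    by rewrite ltr_pXn2r // ?nnegrE ?normr_ge0 // ltW.
  by rewrite ltNge ha2.
have h1 : (#|St1 :\: S| <= s)%N.
  by apply: leq_trans hB; apply: subset_leq_card.
split => //.
have sub : S :|: St :|: St1 \subset S :|: (St :\: S) :|: (St1 :\: S).
  apply/fintype.subsetP => i; rewrite !finset.in_setU !finset.in_setD.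
  by case: (i \in S); case: (i \in St); case: (i \in St1).
apply: leq_trans (subset_leq_card sub) _.
apply: leq_trans (leq_card_setU _ _).1 _.
rewrite mulSn mul2n -addnn addnA leq_add //.
apply: leq_trans (leq_card_setU _ _).1 _.
by rewrite leq_add.
Qed.
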